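(* Let $n$ be a positive integer. If $n \equiv 1 \pmod 3$, then $n \leq \operatorname{adim}(P_3 \square P_n) \leq n+1$. Otherwise, $n-1 \leq \operatorname{adim}(P_3 \square P_n) \leq n$.
   Context: All graphs are finite, simple and undirected. $P_n$ is the path on $n$ vertices and $\square$ is the Cartesian product of graphs: $V(G_1\square G_2)=V(G_1)\times V(G_2)$, and $(u,u')$ is adjacent to $(v,v')$ iff either $u=v$ and $u'v'\in E(G_2)$, or $u'=v'$ and $uv\in E(G_1)$. For a graph $G$, $d(u,v)$ is the shortest-path distance ($\infty$ if $u,v$ lie in different components), and $d_1(u,v)=\min(d(u,v),2)$. A set $A\subseteq V(G)$ is an adjacency resolving set if for all distinct $x,y\in V(G)$ there is $z\in A$ with $d_1(z,x)\neq d_1(z,y)$. The adjacency dimension $\operatorname{adim}(G)$ is the minimum cardinality of an adjacency resolving set. *)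

(* Defs.v *)
From mathcomp Require Import all_boot.
Set Implicit Arguments. Unset Strict Implicit. Unset Printing Implicit Defensive.

(* A finite simple graph on vertex type T is given by a symmetric irreflexive
   adjacency relation e : rel T (hypotheses stated where needed). *)

(* d_1(u,v) = min(d(u,v), 2): 0 if u = v, 1 if adjacent, 2 otherwise. *)
Definition d1 (T : finType) (e : rel T) (u v : T) : nat :=
  if u == v then 0 else if e u v then 1 else 2.

Definition adj_resolving (T : finType) (e : rel T) (A : {set T}) : bool :=
  [forall x : T, forall y : T, (x != y) ==> [exists z in A, d1 e z x != d1 e z y]].

(* Minimum cardinality of an adjacency resolving set (setT always resolves,
   so the default #|T| is never smaller than the true minimum). *)
Definition adim (T : finType) (e : rel T) : nat :=
  \big[minn/#|T|]_(A : {set T} | adj_resolving e A) #|A|.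

Definition path_rel (n : nat) : rel 'I_n :=
  fun i j => (i.+1 == j :> nat) || (j.+1 == i :> nat).

Definition cart_rel (T1 T2 : finType) (e1 : rel T1) (e2 : rel T2) : rel (prod T1 T2) :=
  fun u v => ((u.1 == v.1) && e2 u.2 v.2) || ((u.2 == v.2) && e1 u.1 v.1).

Definition grid3 (n : nat) : rel (prod 'I_3 'I_n) := cart_rel (@path_rel 3) (@path_rel n).

(* Main.v *)
Require Import Defs.
From mathcomp Require Import all_boot.
From mathcomp Require Import zify.
Set Implicit Arguments. Unset Strict Implicit. Unset Printing Implicit Defensive.

Definition adjN (c1 r1 c2 r2 : nat) : bool :=
  ((c1 == c2) && ((r1 == r2.+1) || (r2 == r1.+1))) ||
  ((r1 == r2) && ((c1 == c2.+1) || (c2 == c1.+1))).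

Definition Wl : seq (nat * nat) := [seq (c, r) | c <- iota 0 5, r <- iota 0 3].
Definition Yl : seq (nat * nat) := [seq (c, r) | c <- iota 1 3, r <- iota 0 3].
Arguments Wl : simpl never.
Arguments Yl : simpl never.

Definition check_loc (lax : bool) (M : nat -> nat -> bool) (P : nat -> bool) : bool :=
  if P 3 then
  all (fun r => M 3 r ||
     (((lax && (r == 1) && ~~ P 4) || has (fun z => M z.1 z.2 && adjN z.1 z.2 3 r) Wl) &&
      all (fun y => ~~ P y.1 || M y.1 y.2 || (y == (3, r)) ||
            has (fun z => M z.1 z.2 && (adjN z.1 z.2 3 r != adjN z.1 z.2 y.1 y.2)) Wl) Yl))
     (iota 0 3)
  else true.

Definition locm (w : seq nat) (c r : nat) : bool := odd (nth 8 w c %/ 2 ^ r).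
Definition locp (w : seq nat) (c : nat) : bool := nth 8 w c != 8.
Definition check5 lax w := check_loc lax (locm w) (locp w).
Definition popc (c : nat) : nat := odd c + odd (c %/ 2) + odd (c %/ 4).
Definition tbl : seq (seq (seq (seq nat))) :=
[::[::[::[::0;0;0;0;0;0;0;0;0];[::0;0;0;0;0;0;0;0;0];[::0;0;0;0;0;0;0;0;0];[::0;0;0;0;0;0;0;0;0];[::0;0;0;0;0;0;0;0;0];[::0;0;0;0;0;0;0;0;0];[::0;0;0;0;0;0;0;0;0];[::3;4;4;5;4;5;5;6;0];[::0;0;0;0;0;0;0;0;0]];[::[::0;0;0;0;0;0;0;0;0];[::0;0;0;0;0;0;0;0;0];[::0;0;0;0;0;0;0;0;0];[::0;0;0;0;0;0;0;0;0];[::0;0;0;4;0;0;0;5;0];[::3;4;4;5;4;5;5;6;0];[::0;4;0;5;0;5;0;6;0];[::4;5;5;6;5;6;6;7;0];[::0;0;0;0;0;0;0;0;0]];[::[::0;0;0;0;0;0;0;0;0];[::0;0;0;0;0;0;4;5;0];[::0;0;0;0;0;0;0;0;0];[::3;4;4;5;4;5;5;6;0];[::0;0;0;4;0;0;0;5;0];[::2;3;3;4;3;4;4;5;0];[::3;4;4;5;4;5;5;6;0];[::3;4;4;5;4;5;5;6;0];[::0;0;0;0;0;0;0;0;0]];[::[::0;0;0;0;0;0;4;4;0];[::0;0;0;0;3;4;4;5;0];[::2;3;3;4;3;4;4;5;0];[::3;4;4;5;4;5;5;6;0];[::0;0;3;4;0;0;4;5;0];[::3;4;4;5;4;5;5;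6;0];[::3;4;4;5;4;5;5;6;0];[::4;5;5;6;5;6;6;7;0];[::0;0;0;0;0;0;0;0;0]];[::[::0;0;0;0;0;0;0;0;0];[::0;0;0;0;0;0;4;5;0];[::0;0;0;0;0;0;0;0;0];[::0;0;0;0;4;5;5;6;0];[::0;0;0;0;0;0;0;0;0];[::3;4;4;5;4;5;5;6;0];[::0;0;0;0;0;0;0;0;0];[::4;5;5;6;5;6;6;7;0];[::0;0;0;0;0;0;0;0;0]];[::[::0;0;3;3;0;0;3;4;0];[::2;3;3;4;3;4;4;5;0];[::2;3;3;4;3;4;4;5;0];[::3;4;4;5;4;5;5;6;0];[::2;3;3;4;3;4;4;5;0];[::3;4;4;5;4;5;5;6;0];[::3;4;4;5;4;5;5;6;0];[::4;5;5;6;5;6;6;7;0];[::0;0;0;0;0;0;0;0;0]];[::[::0;0;0;4;0;0;0;4;0];[::0;0;3;4;0;0;4;5;0];[::2;3;3;4;3;4;4;5;0];[::3;4;4;5;4;5;5;6;0];[::0;3;0;4;0;4;0;5;0];[::3;4;4;5;4;5;5;6;0];[::3;4;4;5;4;5;5;6;0];[::4;5;5;6;5;6;6;7;0];[::0;0;0;0;0;0;0;0;0]];[::[::2;3;3;4;3;4;4;4;0];[::3;4;4;5;3;4;4;5;0];[::2;3;3;4;3;4;4;5;0];[::3;4;4;5;4;5;5;6;0];[::3;3;4;4;4;4;5;5;0];[::3;4;4;5;4;5;5;6;0];[::3;4;4;5;4;5;5;6;0];[::4;5;5;6;5;6;6;7;0];[::0;0;0;0;0;0;0;0;0]];[::[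::0;0;0;0;0;0;0;0;0];[::0;0;0;0;0;0;0;0;0];[::0;0;0;0;0;0;0;0;0];[::0;0;0;0;0;0;0;0;0];[::0;0;0;0;0;0;0;0;0];[::0;0;0;0;0;0;0;0;0];[::0;0;0;0;0;0;0;0;0];[::0;0;0;0;0;0;0;0;0];[::0;0;0;0;0;0;0;0;0]]];[::[::[::0;0;0;0;0;0;0;0;0];[::0;0;0;0;0;0;0;0;0];[::0;0;0;0;0;0;0;0;0];[::0;0;0;0;0;0;0;0;0];[::0;0;0;0;0;0;0;0;0];[::0;0;0;0;0;0;0;0;0];[::0;3;0;4;0;4;0;5;0];[::3;4;4;5;4;5;5;6;0];[::0;0;0;0;0;0;0;0;0]];[::[::0;0;0;0;0;0;0;0;0];[::0;0;0;0;0;0;0;0;0];[::0;0;0;0;0;0;0;0;0];[::0;0;0;0;0;0;0;0;0];[::0;0;0;4;0;0;0;5;0];[::3;4;4;5;4;5;5;6;0];[::0;4;0;5;0;5;0;6;0];[::4;5;5;6;5;6;6;7;0];[::0;0;0;0;0;0;0;0;0]];[::[::0;0;0;0;0;0;0;4;0];[::0;0;0;0;3;4;4;5;0];[::0;3;0;4;3;4;4;5;0];[::3;4;4;5;4;5;5;6;0];[::0;0;0;4;0;0;0;5;0];[::3;4;4;5;4;5;5;6;0];[::3;4;4;5;4;5;5;6;0];[::4;5;5;6;5;6;6;7;0];[::0;0;0;0;0;0;0;0;0]];[::[::0;0;0;0;0;0;4;5;0];[::0;0;0;0;4;5;5;6;0];[::3;4;4;5;4;5;5;6;0];[::4;5;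5;6;5;6;6;7;0];[::0;0;4;5;0;0;5;6;0];[::4;5;5;6;5;6;6;7;0];[::4;5;5;6;5;6;6;7;0];[::5;6;6;7;6;7;7;8;0];[::0;0;0;0;0;0;0;0;0]];[::[::0;0;0;0;0;0;0;4;0];[::0;0;0;0;3;4;4;5;0];[::0;0;0;0;3;4;4;5;0];[::0;0;0;0;3;4;4;5;0];[::0;3;0;4;0;4;0;5;0];[::3;4;4;5;4;5;5;6;0];[::3;4;4;5;4;5;5;6;0];[::3;4;4;5;4;5;5;6;0];[::0;0;0;0;0;0;0;0;0]];[::[::0;0;3;4;0;0;3;4;0];[::3;4;4;5;3;4;4;5;0];[::2;3;3;4;3;4;4;5;0];[::3;4;4;5;4;5;5;6;0];[::2;3;3;4;3;4;4;5;0];[::3;4;4;5;4;5;5;6;0];[::3;4;4;5;4;5;5;6;0];[::4;5;5;6;5;6;6;7;0];[::0;0;0;0;0;0;0;0;0]];[::[::0;3;0;4;0;3;0;4;0];[::2;3;3;4;3;4;4;5;0];[::2;3;3;4;3;4;4;5;0];[::3;4;4;5;4;5;5;6;0];[::0;3;0;4;0;4;0;5;0];[::3;4;4;5;4;5;5;6;0];[::3;4;4;5;4;5;5;6;0];[::4;5;5;6;5;6;6;7;0];[::0;0;0;0;0;0;0;0;0]];[::[::2;3;3;4;3;4;4;5;0];[::3;4;4;5;4;5;5;6;0];[::3;4;4;5;4;5;5;6;0];[::4;5;5;6;5;6;6;7;0];[::3;4;4;5;4;5;5;6;0];[::4;5;5;6;5;6;6;7;0];[::4;5;5;6;5;6;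6;7;0];[::5;6;6;7;6;7;7;8;0];[::0;0;0;0;0;0;0;0;0]];[::[::0;0;0;0;0;0;0;0;0];[::0;0;0;0;0;0;0;0;0];[::0;0;0;0;0;0;0;0;0];[::0;0;0;0;0;0;0;0;0];[::0;0;0;0;0;0;0;0;0];[::0;0;0;0;0;0;0;0;0];[::0;0;0;0;0;0;0;0;0];[::0;0;0;0;0;0;0;0;0];[::0;0;0;0;0;0;0;0;0]]];[::[::[::0;0;0;0;0;0;0;0;0];[::0;0;0;0;0;0;0;0;0];[::0;0;0;0;0;0;0;0;0];[::0;0;0;0;0;0;0;0;0];[::0;0;0;0;0;0;0;0;0];[::2;3;3;4;3;4;4;5;0];[::0;0;0;0;0;0;0;0;0];[::3;4;4;5;4;5;5;6;0];[::0;0;0;0;0;0;0;0;0]];[::[::0;0;0;0;0;0;0;0;0];[::0;0;0;0;0;0;0;0;0];[::0;0;0;0;0;0;0;0;0];[::0;0;0;0;0;0;0;0;0];[::0;0;3;4;0;0;4;5;0];[::3;4;4;5;4;5;5;6;0];[::2;3;3;4;3;4;4;5;0];[::3;4;4;5;4;5;5;6;0];[::0;0;0;0;0;0;0;0;0]];[::[::0;0;0;0;0;0;0;0;0];[::0;0;0;0;0;0;4;5;0];[::0;0;0;0;0;0;0;0;0];[::3;4;4;5;4;5;5;6;0];[::0;0;0;4;0;0;0;5;0];[::3;4;4;5;4;5;5;6;0];[::3;4;4;5;4;5;5;6;0];[::4;5;5;6;5;6;6;7;0];[::0;0;0;0;0;0;0;0;0]];[::[::0;0;0;0;0;0;3;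4;0];[::0;0;0;0;3;4;4;5;0];[::2;3;3;4;3;4;4;5;0];[::3;4;4;5;4;5;5;6;0];[::0;0;3;4;0;0;4;5;0];[::3;4;4;5;4;5;5;6;0];[::3;4;4;5;4;5;5;6;0];[::4;5;5;6;5;6;6;7;0];[::0;0;0;0;0;0;0;0;0]];[::[::0;0;0;0;0;0;0;0;0];[::0;0;3;4;0;0;4;5;0];[::0;0;0;0;0;0;0;0;0];[::2;3;3;4;3;4;4;5;0];[::0;0;0;0;0;0;0;0;0];[::3;4;4;5;4;5;5;6;0];[::0;0;0;0;0;0;0;0;0];[::3;4;4;5;4;5;5;6;0];[::0;0;0;0;0;0;0;0;0]];[::[::0;0;2;3;0;0;3;4;0];[::2;3;3;4;3;4;4;5;0];[::2;3;3;4;3;4;4;5;0];[::3;4;4;5;4;5;5;6;0];[::2;3;3;4;3;4;4;5;0];[::3;4;4;5;4;5;5;6;0];[::3;4;4;5;4;5;5;6;0];[::4;5;5;6;5;6;6;7;0];[::0;0;0;0;0;0;0;0;0]];[::[::0;0;0;3;0;0;0;4;0];[::0;0;3;4;0;0;4;5;0];[::2;3;3;4;3;4;4;5;0];[::3;4;4;5;4;5;5;6;0];[::0;3;0;4;0;4;0;5;0];[::3;4;4;5;4;5;5;6;0];[::3;4;4;5;4;5;5;6;0];[::4;5;5;6;5;6;6;7;0];[::0;0;0;0;0;0;0;0;0]];[::[::2;3;3;4;3;4;4;5;0];[::3;4;4;5;4;5;5;6;0];[::3;4;4;5;4;5;5;6;0];[::4;5;5;6;5;6;6;7;0];[::3;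4;4;5;4;5;5;6;0];[::4;5;5;6;5;6;6;7;0];[::4;5;5;6;5;6;6;7;0];[::5;6;6;7;6;7;7;8;0];[::0;0;0;0;0;0;0;0;0]];[::[::0;0;0;0;0;0;0;0;0];[::0;0;0;0;0;0;0;0;0];[::0;0;0;0;0;0;0;0;0];[::0;0;0;0;0;0;0;0;0];[::0;0;0;0;0;0;0;0;0];[::0;0;0;0;0;0;0;0;0];[::0;0;0;0;0;0;0;0;0];[::0;0;0;0;0;0;0;0;0];[::0;0;0;0;0;0;0;0;0]]];[::[::[::0;0;0;0;0;0;0;0;0];[::0;0;0;0;0;0;0;0;0];[::0;0;0;0;0;0;0;0;0];[::0;0;0;0;0;0;0;0;0];[::0;0;0;4;0;0;0;5;0];[::2;3;3;4;3;4;4;5;0];[::2;3;3;4;3;4;4;5;0];[::3;4;4;5;4;5;5;6;0];[::0;0;0;0;0;0;0;0;0]];[::[::0;0;0;0;0;0;0;0;0];[::0;0;0;0;0;0;0;0;0];[::0;0;0;0;0;0;0;0;0];[::0;0;0;0;0;0;0;0;0];[::0;0;3;4;0;0;4;5;0];[::3;4;4;5;4;5;5;6;0];[::3;4;4;5;4;5;5;6;0];[::4;5;5;6;5;6;6;7;0];[::0;0;0;0;0;0;0;0;0]];[::[::0;0;0;0;0;0;0;4;0];[::0;0;0;0;3;4;4;5;0];[::0;3;0;4;3;4;4;5;0];[::3;4;4;5;4;5;5;6;0];[::0;0;0;4;0;0;0;5;0];[::3;4;4;5;4;5;5;6;0];[::3;4;4;5;4;5;5;6;0];[::4;5;5;6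;5;6;6;7;0];[::0;0;0;0;0;0;0;0;0]];[::[::0;0;0;0;0;0;4;5;0];[::0;0;0;0;4;5;5;6;0];[::3;4;4;5;4;5;5;6;0];[::4;5;5;6;5;6;6;7;0];[::0;0;4;5;0;0;5;6;0];[::4;5;5;6;5;6;6;7;0];[::4;5;5;6;5;6;6;7;0];[::5;6;6;7;6;7;7;8;0];[::0;0;0;0;0;0;0;0;0]];[::[::0;0;0;3;0;0;0;4;0];[::2;3;3;4;3;4;4;5;0];[::2;3;3;4;3;4;4;5;0];[::3;4;4;5;4;5;5;6;0];[::0;3;0;4;0;4;0;5;0];[::3;4;4;5;4;5;5;6;0];[::3;4;4;5;4;5;5;6;0];[::4;5;5;6;5;6;6;7;0];[::0;0;0;0;0;0;0;0;0]];[::[::0;0;3;4;0;0;4;5;0];[::3;4;4;5;4;5;5;6;0];[::3;4;4;5;4;5;5;6;0];[::4;5;5;6;5;6;6;7;0];[::3;4;4;5;4;5;5;6;0];[::4;5;5;6;5;6;6;7;0];[::4;5;5;6;5;6;6;7;0];[::5;6;6;7;6;7;7;8;0];[::0;0;0;0;0;0;0;0;0]];[::[::0;3;0;4;0;4;0;5;0];[::3;4;4;5;4;5;5;6;0];[::3;4;4;5;4;5;5;6;0];[::4;5;5;6;5;6;6;7;0];[::0;4;0;5;0;5;0;6;0];[::4;5;5;6;5;6;6;7;0];[::4;5;5;6;5;6;6;7;0];[::5;6;6;7;6;7;7;8;0];[::0;0;0;0;0;0;0;0;0]];[::[::3;4;4;5;4;5;5;6;0];[::4;5;5;6;5;6;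6;7;0];[::4;5;5;6;5;6;6;7;0];[::5;6;6;7;6;7;7;8;0];[::4;5;5;6;5;6;6;7;0];[::5;6;6;7;6;7;7;8;0];[::5;6;6;7;6;7;7;8;0];[::6;7;7;8;7;8;8;9;0];[::0;0;0;0;0;0;0;0;0]];[::[::0;0;0;0;0;0;0;0;0];[::0;0;0;0;0;0;0;0;0];[::0;0;0;0;0;0;0;0;0];[::0;0;0;0;0;0;0;0;0];[::0;0;0;0;0;0;0;0;0];[::0;0;0;0;0;0;0;0;0];[::0;0;0;0;0;0;0;0;0];[::0;0;0;0;0;0;0;0;0];[::0;0;0;0;0;0;0;0;0]]];[::[::[::0;0;0;0;0;0;0;0;0];[::0;0;0;0;0;0;0;0;0];[::0;0;0;0;0;0;0;0;0];[::0;0;0;0;3;4;4;5;0];[::0;0;0;0;0;0;0;0;0];[::0;0;0;0;0;0;0;0;0];[::0;0;0;0;0;0;0;0;0];[::3;4;4;5;4;5;5;6;0];[::0;0;0;0;0;0;0;0;0]];[::[::0;0;0;0;0;0;0;4;0];[::0;0;0;0;3;4;4;5;0];[::0;3;0;4;0;4;0;5;0];[::3;4;4;5;4;5;5;6;0];[::0;3;0;4;0;4;0;5;0];[::3;4;4;5;4;5;5;6;0];[::0;3;0;4;0;4;0;5;0];[::3;4;4;5;4;5;5;6;0];[::0;0;0;0;0;0;0;0;0]];[::[::0;0;0;0;0;0;0;4;0];[::0;0;0;0;0;0;4;5;0];[::0;3;0;4;3;4;4;5;0];[::3;4;4;5;4;5;5;6;0];[::0;3;0;4;0;4;0;5;0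];[::3;4;4;5;4;5;5;6;0];[::3;4;4;5;4;5;5;6;0];[::4;5;5;6;5;6;6;7;0];[::0;0;0;0;0;0;0;0;0]];[::[::0;0;0;0;3;3;4;4;0];[::0;0;0;0;3;4;4;5;0];[::2;3;3;4;3;4;4;5;0];[::3;4;4;5;4;5;5;6;0];[::2;3;3;4;3;4;4;5;0];[::3;4;4;5;4;5;5;6;0];[::3;4;4;5;4;5;5;6;0];[::4;5;5;6;5;6;6;7;0];[::0;0;0;0;0;0;0;0;0]];[::[::0;0;0;0;0;0;0;0;0];[::0;0;0;0;0;0;4;5;0];[::0;0;0;0;0;0;0;0;0];[::0;0;0;0;4;5;5;6;0];[::0;0;0;0;0;0;0;0;0];[::3;4;4;5;4;5;5;6;0];[::0;0;0;0;0;0;0;0;0];[::4;5;5;6;5;6;6;7;0];[::0;0;0;0;0;0;0;0;0]];[::[::0;0;3;3;0;0;4;4;0];[::2;3;3;4;3;4;4;5;0];[::2;3;3;4;3;4;4;5;0];[::3;4;4;5;4;5;5;6;0];[::3;3;4;4;4;4;5;5;0];[::3;4;4;5;4;5;5;6;0];[::3;4;4;5;4;5;5;6;0];[::4;5;5;6;5;6;6;7;0];[::0;0;0;0;0;0;0;0;0]];[::[::0;0;0;4;0;0;0;5;0];[::0;0;4;5;0;0;5;6;0];[::3;4;4;5;4;5;5;6;0];[::4;5;5;6;5;6;6;7;0];[::0;4;0;5;0;5;0;6;0];[::4;5;5;6;5;6;6;7;0];[::4;5;5;6;5;6;6;7;0];[::5;6;6;7;6;7;7;8;0];[::0;0;0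;0;0;0;0;0;0]];[::[::2;3;3;4;3;4;4;5;0];[::3;4;4;5;4;5;5;6;0];[::3;4;4;5;4;5;5;6;0];[::4;5;5;6;5;6;6;7;0];[::3;4;4;5;4;5;5;6;0];[::4;5;5;6;5;6;6;7;0];[::4;5;5;6;5;6;6;7;0];[::5;6;6;7;6;7;7;8;0];[::0;0;0;0;0;0;0;0;0]];[::[::0;0;0;0;0;0;0;0;0];[::0;0;0;0;0;0;0;0;0];[::0;0;0;0;0;0;0;0;0];[::0;0;0;0;0;0;0;0;0];[::0;0;0;0;0;0;0;0;0];[::0;0;0;0;0;0;0;0;0];[::0;0;0;0;0;0;0;0;0];[::0;0;0;0;0;0;0;0;0];[::0;0;0;0;0;0;0;0;0]]];[::[::[::0;0;0;0;0;0;0;0;0];[::0;0;0;0;0;0;0;0;0];[::0;0;0;0;0;3;0;4;0];[::0;0;0;0;3;4;4;5;0];[::0;0;0;0;0;0;0;0;0];[::0;0;0;0;0;0;0;0;0];[::0;3;0;4;0;4;0;5;0];[::3;4;4;5;4;5;5;6;0];[::0;0;0;0;0;0;0;0;0]];[::[::0;0;0;0;0;0;0;4;0];[::0;0;0;0;3;4;4;5;0];[::0;3;0;4;0;4;0;5;0];[::3;4;4;5;4;5;5;6;0];[::0;3;0;4;0;4;0;5;0];[::3;4;4;5;4;5;5;6;0];[::0;4;0;5;0;5;0;6;0];[::4;5;5;6;5;6;6;7;0];[::0;0;0;0;0;0;0;0;0]];[::[::0;0;0;0;0;3;0;4;0];[::0;0;0;0;3;4;4;5;0];[::0;3;0;4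;3;4;4;5;0];[::3;4;4;5;4;5;5;6;0];[::0;3;0;4;0;4;0;5;0];[::3;4;4;5;4;5;5;6;0];[::3;4;4;5;4;5;5;6;0];[::4;5;5;6;5;6;6;7;0];[::0;0;0;0;0;0;0;0;0]];[::[::0;0;0;0;3;4;4;5;0];[::0;0;0;0;4;5;5;6;0];[::3;4;4;5;4;5;5;6;0];[::4;5;5;6;5;6;6;7;0];[::3;4;4;5;4;5;5;6;0];[::4;5;5;6;5;6;6;7;0];[::4;5;5;6;5;6;6;7;0];[::5;6;6;7;6;7;7;8;0];[::0;0;0;0;0;0;0;0;0]];[::[::0;0;0;0;0;0;0;4;0];[::0;0;0;0;3;4;4;5;0];[::0;0;0;0;3;4;4;5;0];[::0;0;0;0;4;5;5;6;0];[::0;3;0;4;0;4;0;5;0];[::3;4;4;5;4;5;5;6;0];[::3;4;4;5;4;5;5;6;0];[::4;5;5;6;5;6;6;7;0];[::0;0;0;0;0;0;0;0;0]];[::[::0;0;3;4;0;0;4;5;0];[::3;4;4;5;4;5;5;6;0];[::3;4;4;5;4;5;5;6;0];[::4;5;5;6;5;6;6;7;0];[::3;4;4;5;4;5;5;6;0];[::4;5;5;6;5;6;6;7;0];[::4;5;5;6;5;6;6;7;0];[::5;6;6;7;6;7;7;8;0];[::0;0;0;0;0;0;0;0;0]];[::[::0;3;0;4;0;4;0;5;0];[::3;4;4;5;4;5;5;6;0];[::3;4;4;5;4;5;5;6;0];[::4;5;5;6;5;6;6;7;0];[::0;4;0;5;0;5;0;6;0];[::4;5;5;6;5;6;6;7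;0];[::4;5;5;6;5;6;6;7;0];[::5;6;6;7;6;7;7;8;0];[::0;0;0;0;0;0;0;0;0]];[::[::3;4;4;5;4;5;5;6;0];[::4;5;5;6;5;6;6;7;0];[::4;5;5;6;5;6;6;7;0];[::5;6;6;7;6;7;7;8;0];[::4;5;5;6;5;6;6;7;0];[::5;6;6;7;6;7;7;8;0];[::5;6;6;7;6;7;7;8;0];[::6;7;7;8;7;8;8;9;0];[::0;0;0;0;0;0;0;0;0]];[::[::0;0;0;0;0;0;0;0;0];[::0;0;0;0;0;0;0;0;0];[::0;0;0;0;0;0;0;0;0];[::0;0;0;0;0;0;0;0;0];[::0;0;0;0;0;0;0;0;0];[::0;0;0;0;0;0;0;0;0];[::0;0;0;0;0;0;0;0;0];[::0;0;0;0;0;0;0;0;0];[::0;0;0;0;0;0;0;0;0]]];[::[::[::0;0;0;0;0;0;0;0;0];[::0;0;0;0;0;0;4;5;0];[::0;0;0;0;0;0;0;0;0];[::2;3;3;4;3;4;4;5;0];[::0;0;0;0;0;0;0;0;0];[::2;3;3;4;3;4;4;5;0];[::0;0;0;0;0;0;0;0;0];[::3;4;4;5;4;5;5;6;0];[::0;0;0;0;0;0;0;0;0]];[::[::0;0;0;0;0;0;3;4;0];[::0;0;0;0;3;4;4;5;0];[::2;3;3;4;3;4;4;5;0];[::3;4;4;5;4;5;5;6;0];[::2;3;3;4;3;4;4;5;0];[::3;4;4;5;4;5;5;6;0];[::3;4;4;5;4;5;5;6;0];[::4;5;5;6;5;6;6;7;0];[::0;0;0;0;0;0;0;0;0]];[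::[::0;0;0;0;0;0;0;4;0];[::0;0;0;0;0;0;4;5;0];[::0;3;0;4;3;4;4;5;0];[::3;4;4;5;4;5;5;6;0];[::0;3;0;4;0;4;0;5;0];[::3;4;4;5;4;5;5;6;0];[::3;4;4;5;4;5;5;6;0];[::4;5;5;6;5;6;6;7;0];[::0;0;0;0;0;0;0;0;0]];[::[::0;0;0;0;3;4;4;5;0];[::0;0;0;0;4;5;5;6;0];[::3;4;4;5;4;5;5;6;0];[::4;5;5;6;5;6;6;7;0];[::3;4;4;5;4;5;5;6;0];[::4;5;5;6;5;6;6;7;0];[::4;5;5;6;5;6;6;7;0];[::5;6;6;7;6;7;7;8;0];[::0;0;0;0;0;0;0;0;0]];[::[::0;0;0;0;0;0;0;0;0];[::0;0;3;4;0;0;4;5;0];[::0;0;0;0;0;0;0;0;0];[::3;4;4;5;4;5;5;6;0];[::0;0;0;0;0;0;0;0;0];[::3;4;4;5;4;5;5;6;0];[::0;0;0;0;0;0;0;0;0];[::4;5;5;6;5;6;6;7;0];[::0;0;0;0;0;0;0;0;0]];[::[::0;0;3;4;0;0;4;5;0];[::3;4;4;5;4;5;5;6;0];[::3;4;4;5;4;5;5;6;0];[::4;5;5;6;5;6;6;7;0];[::3;4;4;5;4;5;5;6;0];[::4;5;5;6;5;6;6;7;0];[::4;5;5;6;5;6;6;7;0];[::5;6;6;7;6;7;7;8;0];[::0;0;0;0;0;0;0;0;0]];[::[::0;0;0;4;0;0;0;5;0];[::0;0;4;5;0;0;5;6;0];[::3;4;4;5;4;5;5;6;0];[::4;5;5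;6;5;6;6;7;0];[::0;4;0;5;0;5;0;6;0];[::4;5;5;6;5;6;6;7;0];[::4;5;5;6;5;6;6;7;0];[::5;6;6;7;6;7;7;8;0];[::0;0;0;0;0;0;0;0;0]];[::[::3;4;4;5;4;5;5;6;0];[::4;5;5;6;5;6;6;7;0];[::4;5;5;6;5;6;6;7;0];[::5;6;6;7;6;7;7;8;0];[::4;5;5;6;5;6;6;7;0];[::5;6;6;7;6;7;7;8;0];[::5;6;6;7;6;7;7;8;0];[::6;7;7;8;7;8;8;9;0];[::0;0;0;0;0;0;0;0;0]];[::[::0;0;0;0;0;0;0;0;0];[::0;0;0;0;0;0;0;0;0];[::0;0;0;0;0;0;0;0;0];[::0;0;0;0;0;0;0;0;0];[::0;0;0;0;0;0;0;0;0];[::0;0;0;0;0;0;0;0;0];[::0;0;0;0;0;0;0;0;0];[::0;0;0;0;0;0;0;0;0];[::0;0;0;0;0;0;0;0;0]]];[::[::[::0;0;0;0;0;0;0;4;0];[::0;0;0;0;3;4;4;5;0];[::0;3;0;4;3;4;4;5;0];[::3;4;4;5;4;5;5;6;0];[::0;3;0;4;0;4;0;5;0];[::3;4;4;5;4;5;5;6;0];[::3;4;4;5;4;5;5;6;0];[::3;4;4;5;4;5;5;6;0];[::0;0;0;0;0;0;0;0;0]];[::[::0;0;0;0;0;0;4;5;0];[::0;0;0;0;4;5;5;6;0];[::3;4;4;5;4;5;5;6;0];[::4;5;5;6;5;6;6;7;0];[::2;3;3;4;3;4;4;5;0];[::3;4;4;5;4;5;5;6;0];[::3;4;4;5;4;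5;5;6;0];[::4;5;5;6;5;6;6;7;0];[::0;0;0;0;0;0;0;0;0]];[::[::0;0;0;0;0;3;0;4;0];[::0;0;0;0;3;4;4;5;0];[::0;3;0;4;3;4;4;5;0];[::3;4;4;5;4;5;5;6;0];[::0;3;0;4;0;4;0;5;0];[::3;4;4;5;4;5;5;6;0];[::3;4;4;5;4;5;5;6;0];[::4;5;5;6;5;6;6;7;0];[::0;0;0;0;0;0;0;0;0]];[::[::0;0;0;0;3;4;4;5;0];[::0;0;0;0;4;5;5;6;0];[::3;4;4;5;4;5;5;6;0];[::4;5;5;6;5;6;6;7;0];[::3;4;4;5;4;5;5;6;0];[::4;5;5;6;5;6;6;7;0];[::4;5;5;6;5;6;6;7;0];[::5;6;6;7;6;7;7;8;0];[::0;0;0;0;0;0;0;0;0]];[::[::0;0;0;4;0;0;0;5;0];[::2;3;3;4;3;4;4;5;0];[::3;4;4;5;4;5;5;6;0];[::3;4;4;5;4;5;5;6;0];[::0;4;0;5;0;5;0;6;0];[::3;4;4;5;4;5;5;6;0];[::4;5;5;6;5;6;6;7;0];[::4;5;5;6;5;6;6;7;0];[::0;0;0;0;0;0;0;0;0]];[::[::0;0;3;4;0;0;4;5;0];[::3;4;4;5;4;5;5;6;0];[::3;4;4;5;4;5;5;6;0];[::4;5;5;6;5;6;6;7;0];[::3;4;4;5;4;5;5;6;0];[::4;5;5;6;5;6;6;7;0];[::4;5;5;6;5;6;6;7;0];[::5;6;6;7;6;7;7;8;0];[::0;0;0;0;0;0;0;0;0]];[::[::0;3;0;4;0;4;0;5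;0];[::3;4;4;5;4;5;5;6;0];[::3;4;4;5;4;5;5;6;0];[::4;5;5;6;5;6;6;7;0];[::0;4;0;5;0;5;0;6;0];[::4;5;5;6;5;6;6;7;0];[::4;5;5;6;5;6;6;7;0];[::5;6;6;7;6;7;7;8;0];[::0;0;0;0;0;0;0;0;0]];[::[::3;4;4;5;4;5;5;6;0];[::4;5;5;6;5;6;6;7;0];[::4;5;5;6;5;6;6;7;0];[::5;6;6;7;6;7;7;8;0];[::4;5;5;6;5;6;6;7;0];[::5;6;6;7;6;7;7;8;0];[::5;6;6;7;6;7;7;8;0];[::6;7;7;8;7;8;8;9;0];[::0;0;0;0;0;0;0;0;0]];[::[::0;0;0;0;0;0;0;0;0];[::0;0;0;0;0;0;0;0;0];[::0;0;0;0;0;0;0;0;0];[::0;0;0;0;0;0;0;0;0];[::0;0;0;0;0;0;0;0;0];[::0;0;0;0;0;0;0;0;0];[::0;0;0;0;0;0;0;0;0];[::0;0;0;0;0;0;0;0;0];[::0;0;0;0;0;0;0;0;0]]];[::[::[::0;0;0;0;0;0;0;0;0];[::0;0;0;0;0;0;0;0;0];[::0;0;0;0;0;0;0;0;0];[::0;0;0;0;0;0;0;0;0];[::0;0;0;0;0;0;0;0;0];[::0;0;0;0;0;0;0;0;0];[::0;0;0;0;0;0;0;0;0];[::2;3;3;4;3;4;4;5;0];[::0;0;0;0;0;0;0;0;0]];[::[::0;0;0;0;0;0;0;0;0];[::0;0;0;0;0;0;0;0;0];[::0;0;0;0;0;0;0;0;0];[::0;0;0;0;0;0;0;0;0];[: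:0;0;0;3;0;0;0;4;0];[::2;3;3;4;3;4;4;5;0];[::0;3;0;4;0;4;0;5;0];[::3;4;4;5;4;5;5;6;0];[::0;0;0;0;0;0;0;0;0]];[::[::0;0;0;0;0;0;0;0;0];[::0;0;0;0;0;0;3;4;0];[::0;0;0;0;0;0;0;0;0];[::2;3;3;4;3;4;4;5;0];[::0;0;0;3;0;0;0;4;0];[::2;3;3;4;3;4;4;5;0];[::2;3;3;4;3;4;4;5;0];[::3;4;4;5;4;5;5;6;0];[::0;0;0;0;0;0;0;0;0]];[::[::0;0;0;0;0;0;3;4;0];[::0;0;0;0;3;4;4;5;0];[::2;3;3;4;3;4;4;5;0];[::3;4;4;5;4;5;5;6;0];[::0;0;3;4;0;0;4;5;0];[::3;4;4;5;4;5;5;6;0];[::3;4;4;5;4;5;5;6;0];[::4;5;5;6;5;6;6;7;0];[::0;0;0;0;0;0;0;0;0]];[::[::0;0;0;0;0;0;0;0;0];[::0;0;0;0;0;0;3;4;0];[::0;0;0;0;0;0;0;0;0];[::0;0;0;0;3;4;4;5;0];[::0;0;0;0;0;0;0;0;0];[::2;3;3;4;3;4;4;5;0];[::0;0;0;0;0;0;0;0;0];[::3;4;4;5;4;5;5;6;0];[::0;0;0;0;0;0;0;0;0]];[::[::0;0;2;3;0;0;3;4;0];[::2;3;3;4;3;4;4;5;0];[::2;3;3;4;3;4;4;5;0];[::3;4;4;5;4;5;5;6;0];[::2;3;3;4;3;4;4;5;0];[::3;4;4;5;4;5;5;6;0];[::3;4;4;5;4;5;5;6;0];[::4;5;5;6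;5;6;6;7;0];[::0;0;0;0;0;0;0;0;0]];[::[::0;0;0;3;0;0;0;4;0];[::0;0;3;4;0;0;4;5;0];[::2;3;3;4;3;4;4;5;0];[::3;4;4;5;4;5;5;6;0];[::0;3;0;4;0;4;0;5;0];[::3;4;4;5;4;5;5;6;0];[::3;4;4;5;4;5;5;6;0];[::4;5;5;6;5;6;6;7;0];[::0;0;0;0;0;0;0;0;0]];[::[::2;3;3;4;3;4;4;5;0];[::3;4;4;5;4;5;5;6;0];[::3;4;4;5;4;5;5;6;0];[::4;5;5;6;5;6;6;7;0];[::3;4;4;5;4;5;5;6;0];[::4;5;5;6;5;6;6;7;0];[::4;5;5;6;5;6;6;7;0];[::5;6;6;7;6;7;7;8;0];[::0;0;0;0;0;0;0;0;0]];[::[::0;0;0;0;0;0;0;3;0];[::0;0;0;0;2;3;3;4;0];[::0;2;0;3;2;3;3;4;0];[::2;3;3;4;3;4;4;5;0];[::0;2;0;3;0;3;0;4;0];[::2;3;3;4;3;4;4;5;0];[::2;3;3;4;3;4;4;5;0];[::3;4;4;5;4;5;5;6;0];[::1;2;2;3;2;3;3;4;2]]]].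
Definition look (a b c d : nat) : nat :=
  nth 0 (nth [::] (nth [::] (nth [::] tbl a) b) c) d.

Definition cert_step (a b c d : nat) : bool :=
  let v := look a b c d in
  if v == 0 then true else
  all (fun x => if check5 false [:: a; b; c; d; x] then
                  (look b c d x != 0) && (look b c d x + 1 <= v + popc x) else true) (iota 0 8)
  && (if (d != 8) && check5 false [:: a; b; c; d; 8] then 3 <= v else true).

Definition cert : bool :=
  all (fun a => all (fun b => all (fun c => all (fun d => cert_step a b c d)
    (iota 0 9)) (iota 0 9)) (iota 0 9)) (iota 0 9).

Lemma cert_ok : cert = true.
Proof. vm_compute. reflexivity. Qed.

Ltac nlia := repeat match goal with
    | H : is_true (_ \in _) |- _ => clear H
    | H : is_true (~~ _) |- _ => clear H
    | H : is_true (locm _ _ _) |- _ => clear H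
    | H : is_true (locp _ _) |- _ => clear H
    | H : is_true (grid3 _ _) |- _ => clear H
    | H : @eq bool _ _ |- _ => clear H
    end; lia.
Lemma bigmin_seq_le (I : eqType) (r : seq I) (P : pred I) (F : I -> nat) x j :
  j \in r -> P j -> \big[minn/x]_(i <- r | P i) F i <= F j.
Proof.
elim: r => // i r IH; rewrite inE big_cons => /orP [/eqP <- -> | jr Pj].
  exact: geq_minl.
case: ifP => _; last exact: IH.
exact: leq_trans (geq_minr _ _) (IH jr Pj).
Qed.

Lemma adim_le (T : finType) (e : rel T) (A : {set T}) :
  adj_resolving e A -> adim e <= #|A|.
Proof. by move=> h; rewrite /adim; apply: bigmin_seq_le => //; rewrite mem_index_enum. Qed.

Lemma adim_ge (T : finType) (e : rel T) m :
  m <= #|T| -> (forall A : {set T}, adj_resolving e A -> m <= #|A|) -> m <= adim e.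
Proof.
move=> h1 h2; rewrite /adim; apply: (big_ind (fun y => m <= y)) => //.
by move=> a b ha hb; rewrite leq_min ha hb.
Qed.

Definition memb n (A : {set 'I_3 * 'I_n}) (r j : nat) : bool :=
  [exists v in A, (v.1 == r :> nat) && (v.2 == j :> nat)].
Definition codeA n (A : {set 'I_3 * 'I_n}) (j : nat) : nat :=
  memb A 0 j + 2 * memb A 1 j + 4 * memb A 2 j.
Definition cd n (A : {set 'I_3 * 'I_n}) (g : nat) : nat :=
  if (4 <= g) && (g < n + 4) then codeA A (g - 4) else 8.
Definition win n (A : {set 'I_3 * 'I_n}) (o : nat) : seq nat :=
  [:: cd A o; cd A o.+1; cd A o.+2; cd A o.+3; cd A o.+4].

Lemma membE n (A : {set 'I_3 * 'I_n}) (v : 'I_3 * 'I_n) : memb A v.1 v.2 = (v \in A).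
Proof.
apply/existsP/idP => [[u /andP [uA /andP [/eqP h1 /eqP h2]]] | vA]; last first.
  by exists v; rewrite vA !eqxx.
have e1 : v.1 = u.1 by apply: val_inj.
have e2 : v.2 = u.2 by apply: val_inj.
by rewrite [v]surjective_pairing e1 e2 -surjective_pairing.
Qed.

Lemma bitsE (b0 b1 b2 : bool) r : r < 3 ->
  odd ((b0 + 2 * b1 + 4 * b2) %/ 2 ^ r) = nth false [:: b0; b1; b2] r.
Proof. by case: r => [|[|[|]]] // _; case: b0; case: b1; case: b2. Qed.

Lemma bits8 r : r < 3 -> odd (8 %/ 2 ^ r) = false.
Proof. by case: r => [|[|[|]]]. Qed.

Lemma code_lt8 n (A : {set 'I_3 * 'I_n}) j : codeA A j < 8.
Proof. by rewrite /codeA; case: (memb A 0 j); case: (memb A 1 j); case: (memb A 2 j). Qed.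

Lemma cd_lt9 n (A : {set 'I_3 * 'I_n}) g : cd A g < 9.
Proof. rewrite /cd; case: ifP => // _; exact: ltnW (code_lt8 _ _). Qed.

Lemma nth_win n (A : {set 'I_3 * 'I_n}) o c : c < 5 -> nth 8 (win A o) c = cd A (o + c).
Proof.
by case: c => [|[|[|[|[|]]]]] //= _; rewrite ?addn0 ?addn1 ?addn2 ?addn3 ?addn4.
Qed.

Lemma locm_win n (A : {set 'I_3 * 'I_n}) o c r : c < 5 -> r < 3 ->
  locm (win A o) c r = (4 <= o + c < n + 4) && memb A r (o + c - 4).
Proof.
move=> hc hr; rewrite /locm nth_win // /cd; case: ifP => _; last by rewrite bits8.
rewrite /codeA bitsE //; by case: r hr => [|[|[|]]].
Qed.

Lemma locp_win n (A : {set 'I_3 * 'I_n}) o c : c < 5 ->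
  locp (win A o) c = (4 <= o + c < n + 4).
Proof.
move=> hc; rewrite /locp nth_win // /cd; case: ifP => // _.
by rewrite neq_ltn code_lt8.
Qed.

Lemma locm_locp n (A : {set 'I_3 * 'I_n}) o c r : c < 5 -> r < 3 ->
  locm (win A o) c r -> locp (win A o) c.
Proof. by move=> hc hr; rewrite locm_win // locp_win // => /andP []. Qed.

Lemma adjN_shift k a r1 b r2 : adjN (k + a) r1 (k + b) r2 = adjN a r1 b r2.
Proof. by rewrite /adjN -!addnS !eqn_add2l. Qed.

Lemma grid3E n (u v : 'I_3 * 'I_n) : grid3 u v = adjN (u.2 + 4) u.1 (v.2 + 4) v.1.
Proof.
rewrite /grid3 /cart_rel /path_rel /adjN /= !eqn_add2r -!addSn !eqn_add2r orbC.
congr (_ || _); congr (_ && _); rewrite orbC; congr (_ || _); apply/eqP/eqP; nlia.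
Qed.

Lemma grid3_near n (z x : 'I_3 * 'I_n) : grid3 z x -> x.2 <= z.2 + 1 /\ z.2 <= x.2 + 1.
Proof.
rewrite grid3E /adjN => /orP [/andP [/eqP h _] | /andP [_ /orP [/eqP h|/eqP h]]]; nlia.
Qed.

Lemma real_loc n (A : {set 'I_3 * 'I_n}) j (z : 'I_3 * 'I_n) : j <= z.2 + 3 -> z.2 <= j + 1 ->
  [/\ (z.2 + 3 - j, val z.1) \in Wl, locm (win A j.+1) (z.2 + 3 - j) z.1 = (z \in A) &
   forall c2 r2, adjN (z.2 + 3 - j) z.1 c2 r2 = adjN (z.2 + 4) z.1 (j.+1 + c2) r2].
Proof.
move=> h1 h2; have e : j.+1 + (z.2 + 3 - j) = z.2 + 4 by nlia.
split.
- apply/allpairsP; exists (z.2 + 3 - j, val z.1); rewrite !mem_iota /=; split => //; rewrite ?add0n ?ltn_ord //; nlia.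
- rewrite locm_win ?ltn_ord //; last by nlia.
  rewrite e addnK membE.
  have -> : (4 <= z.2 + 4 < n + 4) by apply/andP; split; [nlia| rewrite ltn_add2r ltn_ord].
  by [].
- by move=> c2 r2; rewrite -(adjN_shift j.+1) e.
Qed.

Lemma loc_real n (A : {set 'I_3 * 'I_n}) j c r : c < 5 -> r < 3 -> locp (win A j.+1) c ->
  exists v : 'I_3 * 'I_n, [/\ val v.1 = r, v.2 + 4 = j.+1 + c & (v \in A) = locm (win A j.+1) c r].
Proof.
move=> hc hr; rewrite locp_win // => /andP [h1 h2].
have hj : j.+1 + c - 4 < n by nlia.
exists (Ordinal hr, Ordinal hj); split => //=; first by nlia.
rewrite locm_win // h1 h2 /=.
by rewrite -(membE A (Ordinal hr, Ordinal hj)).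
Qed.

Lemma Yl_mem c r : (c, r) \in Yl -> [/\ 1 <= c, c < 4 & r < 3].
Proof. case/allpairsP => [[c' r']] []; rewrite !mem_iota /= => h1 h2 [-> ->]; split; move: h1 h2; nlia. Qed.

Lemma Wl_mem c r : (c, r) \in Wl -> c < 5 /\ r < 3.
Proof. case/allpairsP => [[c' r']] []; rewrite !mem_iota /= => h1 h2 [-> ->]; split; move: h1 h2; nlia. Qed.

Lemma bridge_lo n (A : {set 'I_3 * 'I_n}) j : j < n ->
  (forall x, x \notin A -> exists2 z, z \in A & grid3 z x) ->
  (forall x y, x \notin A -> y \notin A -> x != y -> exists2 z, z \in A & grid3 z x != grid3 z y) ->
  check5 false (win A j.+1).
Proof.
move=> hj S1 S2; rewrite /check5 /check_loc.
rewrite locp_win //.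
have -> : (4 <= j.+1 + 3 < n + 4) by apply/andP; split; nlia.
apply/allP => r; rewrite mem_iota add0n => /andP [_ hr].
pose x : 'I_3 * 'I_n := (Ordinal hr, Ordinal hj).
have hx3 : locm (win A j.+1) 3 r = (x \in A).
  rewrite locm_win // -(membE A x) /=.
  have -> : (4 <= j.+1 + 3 < n + 4) by apply/andP; split; nlia.
  by have -> : j.+1 + 3 - 4 = j by nlia.
rewrite hx3; case xA: (x \in A) => //; rewrite orFb.
apply/andP; split.
  apply/orP; right.
  have [[z1 z2] zA zx] := S1 x (negbT xA).
  have [b1 b2] := grid3_near zx.
  rewrite /x /= in b1 b2.
  have hb1 : j <= z2 + 3 by nlia.
  have hb2 : z2 <= j + 1 by nlia.
  have [zW zm zadj] := @real_loc n A j (z1, z2) hb1 hb2.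
  apply/hasP; exists (z2 + 3 - j, val z1) => //=.
  rewrite zm zA zadj /=.
  move: zx; rewrite grid3E /x /=.
  by have -> : j.+1 + 3 = j + 4 by nlia.
apply/allP => [[c' r']] hy.
have [hc1 hc2 hr'] := Yl_mem hy.
case P: (locp (win A j.+1) c'); last by [].
case ym: (locm (win A j.+1) c' r'); first by rewrite orbT.
case ye: ((c', r') == (3, r)); first by rewrite orbT.
apply/orP; right.
have hc5 : c' < 5 by nlia.
have [[y1 y2] [yr yc yA]] := @loc_real n A j c' r' hc5 hr' P.
rewrite ym in yA; rewrite /= in yr yc.
have xy : x != (y1, y2).
  apply/negP => /eqP exy; rewrite /x in exy; case: exy => e1 e2.
  move: ye; rewrite xpair_eqE -yr -e1 /= eqxx andbT.
  move: yc; rewrite -e2 /= => yc.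
  by move/negbT/eqP; nlia.
have [[z1 z2] zA zxy] := S2 x (y1, y2) (negbT xA) (negbT yA) xy.
have hb : j <= z2 + 3 /\ z2 <= j + 1.
  case zx: (grid3 (z1, z2) x) zxy.
    by have [b1 b2] := grid3_near zx; rewrite /x /= in b1 b2; nlia.
  move=> zy0; have zy : grid3 (z1, z2) (y1, y2) by move: zy0; case: (grid3 _ _).
  by have [b1 b2] := grid3_near zy; rewrite /= in b1 b2; nlia.
have [zW zm zadj] := @real_loc n A j (z1, z2) (proj1 hb) (proj2 hb).
apply/hasP; exists (z2 + 3 - j, val z1) => //=.
rewrite zm zA !zadj /=.
move: zxy; rewrite !grid3E yc yr /x /=.
by have -> : j.+1 + 3 = j + 4 by nlia.
Qed.

Lemma cd_small n (A : {set 'I_3 * 'I_n}) g : g < 4 -> cd A g = 8.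
Proof. by rewrite /cd => h; rewrite (leqNgt 4 g) h. Qed.

Lemma cd_big n (A : {set 'I_3 * 'I_n}) g : n + 4 <= g -> cd A g = 8.
Proof. by rewrite /cd => h; rewrite (ltnNge g (n + 4)) h andbF. Qed.

Lemma cd_real n (A : {set 'I_3 * 'I_n}) j : j < n -> cd A (j + 4) = codeA A j.
Proof.
move=> hj; rewrite /cd addnK.
by have -> : (4 <= j + 4) && (j + 4 < n + 4) by apply/andP; split; nlia.
Qed.

Lemma cert_use a b c d : a < 9 -> b < 9 -> c < 9 -> d < 9 -> cert_step a b c d.
Proof.
have m9 x : x < 9 -> x \in iota 0 9 by rewrite mem_iota.
move=> ha hb hc hd; move: cert_ok; rewrite /cert.
by move/allP/(_ a (m9 a ha))/allP/(_ b (m9 b hb))/allP/(_ c (m9 c hc))/allP/(_ d (m9 d hd)).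
Qed.

Lemma cardA n (A : {set 'I_3 * 'I_n}) : #|A| = \sum_(j < n) popc (codeA A j).
Proof.
rewrite -sum1_card big_mkcond /=.
transitivity (\sum_(r < 3) \sum_(j < n) nat_of_bool ((r, j) \in A)).
  rewrite pair_bigA /=; apply: eq_bigr => [[r j]] _ /=.
  by case: ((r, j) \in A).
rewrite exchange_big /=.
apply: eq_bigr => j _.
rewrite !big_ord_recl big_ord0 /=.
rewrite -!(membE A (_, j)) /=.
rewrite /popc /codeA; case: (memb A 0 j); case: (memb A 1 j); case: (memb A 2 j) => //.
Qed.

Lemma lower_strict n (A : {set 'I_3 * 'I_n}) : 0 < n ->
  (forall x, x \notin A -> exists2 z, z \in A & grid3 z x) ->
  (forall x y, x \notin A -> y \notin A -> x != y -> exists2 z, z \in A & grid3 z x != grid3 z y) ->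
  n.+1 <= #|A|.
Proof.
move=> hn S1 S2.
have inv : forall k, k <= n ->
   look (cd A k) (cd A k.+1) (cd A k.+2) (cd A k.+3) != 0 /\
   look (cd A k) (cd A k.+1) (cd A k.+2) (cd A k.+3) + k <= \sum_(0 <= j < k) popc (codeA A j) + 2.
  elim => [_|k IH hk].
    rewrite !cd_small // big_geq //.
  have [IH1 IH2] := IH (ltnW hk).
  have := cert_use (cd_lt9 A k) (cd_lt9 A k.+1) (cd_lt9 A k.+2) (cd_lt9 A k.+3).
  rewrite /cert_step (negbTE IH1) => /andP [/allP /(_ (cd A k.+4)) H _].
  have e : cd A k.+4 = codeA A k by rewrite -(cd_real A hk) addn4.
  have hx : cd A k.+4 \in iota 0 8 by rewrite mem_iota e code_lt8.
  have hchk : check5 false [:: cd A k; cd A k.+1; cd A k.+2; cd A k.+3; cd A k.+4].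
    case: k hk {IH IH1 IH2 H hx e} => [|j] hj.
      rewrite /check5 /check_loc.
      have -> : locp [:: cd A 0; cd A 1; cd A 2; cd A 3; cd A 4] 3 = false.
        by rewrite /locp /=.
      by [].
    exact: (bridge_lo (ltnW hj) S1 S2).
  move: (H hx); rewrite hchk => /andP [H1 H2]; split => //.
  rewrite big_nat_recr //= -e; nlia.
have [I1 I2] := inv n (leqnn n).
have := cert_use (cd_lt9 A n) (cd_lt9 A n.+1) (cd_lt9 A n.+2) (cd_lt9 A n.+3).
rewrite /cert_step (negbTE I1) => /andP [_ H].
have e8 : cd A n.+4 = 8 by rewrite cd_big // addn4.
have hpn : n.-1 < n by nlia.
have hc := bridge_lo hpn S1 S2.
rewrite prednK // /win e8 in hc.
have hd : cd A n.+3 != 8.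
  have e3 : n.+3 = n.-1 + 4 by nlia.
  by rewrite e3 cd_real ?neq_ltn ?code_lt8 //; nlia.
rewrite hd hc /= in H.
rewrite big_mkord in I2; rewrite cardA; nlia.
Qed.

Lemma d1_out (T : finType) (e : rel T) z x : z != x -> d1 e z x = if e z x then 1 else 2.
Proof. by rewrite /d1 => /negbTE ->. Qed.

Lemma res_lower n (A : {set 'I_3 * 'I_n}) : 0 < n -> adj_resolving (@grid3 n) A -> n <= #|A|.
Proof.
move=> hn /forallP R.
have R' : forall x y, x != y -> exists2 z, z \in A & d1 (@grid3 n) z x != d1 (@grid3 n) z y.
  move=> x y xy.
  have /forallP/(_ y)/implyP/(_ xy)/exists_inP [z zA hz] := R x.
  by exists z.
have Rout : forall x y, x \notin A -> y \notin A -> x != y ->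
    exists2 z, z \in A & grid3 z x != grid3 z y.
  move=> x y xA yA xy; have [z zA hz] := R' x y xy.
  exists z => //.
  have zx : z != x by apply: contraNneq xA => <-.
  have zy : z != y by apply: contraNneq yA => <-.
  by move: hz; rewrite !d1_out //; case: (grid3 z x); case: (grid3 z y).
case: (pickP (fun v => (v \notin A) && [forall z in A, ~~ grid3 z v])) => [v /andP [vA vE] | none].
  have h : n.+1 <= #|v |: A|.
    apply: lower_strict => //.
      move=> x; rewrite in_setU1 negb_or => /andP [xv xA].
      case: (boolP [exists z in A, grid3 z x]) => [/exists_inP [z zA zx] | nz].
        by exists z => //; rewrite in_setU1 zA orbT.
      exfalso; have [z zA hz] := R' x v xv.
      have zx : z != x by apply: contraNneq xA => <-.
      have zv : z != v by apply: contraNneq vA => <-.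
      move: hz; rewrite !d1_out //.
      have -> : grid3 z x = false.
        by apply/negP => zx'; move/negP: nz; apply; apply/exists_inP; exists z.
      have -> : grid3 z v = false by apply/negbTE; exact: (forall_inP vE z zA).
      by [].
    move=> x y; rewrite !in_setU1 !negb_or => /andP [_ xA] /andP [_ yA] xy.
    have [z zA hz] := Rout x y xA yA xy; exists z => //; by rewrite in_setU1 zA orbT.
  by move: h; rewrite cardsU1 vA /=; nlia.
have h : n.+1 <= #|A|.
  apply: lower_strict => // x xA.
  case: (boolP [exists z in A, grid3 z x]) => [/exists_inP [z zA zx] | nz]; first by exists z.
  exfalso; move: (none x); rewrite /= xA /=.
  have -> : [forall z in A, ~~ grid3 z x].
    by apply/forall_inP => z zA; apply/negP => zx; move/negP: nz; apply; apply/exists_inP; exists z.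
  by [].
nlia.
Qed.

Lemma bridge_up n (A : {set 'I_3 * 'I_n}) :
  (forall j, j < n -> check5 true (win A j.+1)) -> adj_resolving (@grid3 n) A.
Proof.
move=> H.
have Hc : forall (x1 : 'I_3) (x2 : 'I_n), (x1, x2) \notin A ->
   ((locp (win A x2.+1) 4 == false) && (val x1 == 1) ||
     has (fun z => locm (win A x2.+1) z.1 z.2 && adjN z.1 z.2 3 x1) Wl) &&
   all (fun y => ~~ locp (win A x2.+1) y.1 || locm (win A x2.+1) y.1 y.2 || (y == (3, val x1)) ||
            has (fun z => locm (win A x2.+1) z.1 z.2 &&
                 (adjN z.1 z.2 3 x1 != adjN z.1 z.2 y.1 y.2)) Wl) Yl.
  move=> x1 x2 xA; have hx2 := ltn_ord x2.
  have := H x2 hx2; rewrite /check5 /check_loc locp_win //.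
  have -> : (4 <= x2.+1 + 3 < n + 4) by apply/andP; split; nlia.
  move/allP/(_ (val x1)); rewrite mem_iota add0n ltn_ord => /(_ isT).
  have -> : locm (win A x2.+1) 3 x1 = false.
    rewrite locm_win ?ltn_ord //.
    have -> : x2.+1 + 3 - 4 = x2 by nlia.
    by rewrite (membE A (x1, x2)) (negbTE xA) andbF.
  rewrite orFb => /andP [h1 h2]; apply/andP; split => //.
  case/orP: h1 => [/andP [/andP [_ /eqP e1] e2] | ->]; last by rewrite orbT.
  by rewrite e1 (negbTE e2).
have U1 : forall (x1 : 'I_3) (x2 : 'I_n), (x1, x2) \notin A ->
    (exists2 z : 'I_3 * 'I_n, z \in A & grid3 z (x1, x2)) \/ x2.+1 = n.
  move=> x1 x2 xA; have /andP [h1 _] := Hc x1 x2 xA.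
  case/orP: h1 => [/andP [/eqP np4 _] | /hasP [[c rz] hz /andP [hm ha]]].
    right; move: np4; rewrite locp_win // => h.
    have := ltn_ord x2; move/negbT: h; nlia.
  left; have [hc hr] := Wl_mem hz; have hp := locm_locp hc hr hm.
  have [[v1 v2] [vr vc vA]] := @loc_real n A x2 c rz hc hr hp; rewrite /= in vr vc.
  exists (v1, v2); first by rewrite vA.
  rewrite grid3E /= vc vr -(adjN_shift x2.+1) in ha *.
  by have <- : x2.+1 + 3 = x2 + 4 by nlia.
have U2 : forall (x1 y1 : 'I_3) (x2 y2 : 'I_n), (x1, x2) \notin A -> (y1, y2) \notin A ->
    (x1, x2) != (y1, y2) -> y2 <= x2 -> x2 <= y2 + 2 ->
    exists2 z : 'I_3 * 'I_n, z \in A & grid3 z (x1, x2) != grid3 z (y1, y2).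
  move=> x1 y1 x2 y2 xA yA xy h1 h2; have /andP [_ h] := Hc x1 x2 xA.
  have hy2 := ltn_ord y2; have hx2 := ltn_ord x2.
  have hb1 : x2 <= y2 + 3 by nlia.
  have hb2 : y2 <= x2 + 1 by nlia.
  have [_ ym yadj] := @real_loc n A x2 (y1, y2) hb1 hb2; rewrite /= in ym yadj.
  have yY : (y2 + 3 - x2, val y1) \in Yl.
    apply/allpairsP; exists (y2 + 3 - x2, val y1); rewrite !mem_iota /=; split => //;
      rewrite ?add0n ?ltn_ord //; nlia.
  move/allP/(_ _ yY): h.
  have E1 : locp (win A x2.+1) (y2 + 3 - x2) = true.
    rewrite locp_win; last by nlia.
    by apply/andP; split; nlia.
  have E3 : ((y2 + 3 - x2, val y1) == (3, val x1)) = false.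
    apply/negP; rewrite xpair_eqE => /andP [/eqP e1 /eqP e2].
    move/negP: xy; apply; rewrite xpair_eqE; apply/andP; split; apply/eqP/val_inj => //=; nlia.
  rewrite E1 ym (negbTE yA) E3 !orbF orFb => /hasP [[c rz] hz /andP [hm ha]]; rewrite /= in hm ha.
  have [hc hr] := Wl_mem hz; have hp := locm_locp hc hr hm.
  have [[v1 v2] [vr vc vA]] := @loc_real n A x2 c rz hc hr hp; rewrite /= in vr vc.
  exists (v1, v2); first by rewrite vA.
  rewrite !grid3E /= vc vr.
  have -> : x2 + 4 = x2.+1 + 3 by rewrite addSnnS.
  have -> : y2 + 4 = x2.+1 + (y2 + 3 - x2) by rewrite addSn subnKC // addnS.
  by rewrite !adjN_shift.
have Main : forall x y : 'I_3 * 'I_n, x \notin A -> y \notin A -> x != y ->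
    exists2 z : 'I_3 * 'I_n, z \in A & grid3 z x != grid3 z y.
  move=> [x1 x2] [y1 y2].
  wlog hle : x1 x2 y1 y2 / y2 <= x2.
    move=> W xA yA xy; case: (leqP y2 x2) => h; first exact: W.
    have yx : (y1, y2) != (x1, x2) by rewrite eq_sym.
    have [z zA hz] := W y1 y2 x1 x2 (ltnW h) yA xA yx.
    by exists z; rewrite // eq_sym.
  move=> xA yA xy.
  case: (leqP x2 (y2 + 2)) => hfar; first exact: U2.
  case: (U1 x1 x2 xA) => [[[z1 z2] zA zx] | ex].
    exists (z1, z2) => //.
    have -> : grid3 (z1, z2) (y1, y2) = false.
      apply/negP => zy; have := grid3_near zx; have := grid3_near zy; rewrite /=; nlia.
    by rewrite zx.
  case: (U1 y1 y2 yA) => [[[z1 z2] zA zy] | ey]; last by nlia.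
  exists (z1, z2) => //.
  have -> : grid3 (z1, z2) (x1, x2) = false.
    apply/negP => zx; have := grid3_near zx; have := grid3_near zy; rewrite /=; nlia.
  by rewrite zy.
apply/forallP => x; apply/forallP => y; apply/implyP => xy.
case xA: (x \in A).
  apply/exists_inP; exists x; first by rewrite xA.
  rewrite /d1 eqxx (negbTE xy).
  by case: (grid3 x y).
case yA: (y \in A).
  apply/exists_inP; exists y; first by rewrite yA.
  rewrite /d1 eqxx (eq_sym y x) (negbTE xy).
  by case: (grid3 y x).
have [z zA hz] := Main x y (negbT xA) (negbT yA) xy.
apply/exists_inP; exists z => //.
have zx : z != x by apply: contraTneq zA => ->; rewrite xA.
have zy : z != y by apply: contraTneq zA => ->; rewrite yA.
by move: hz; rewrite !d1_out //; case: (grid3 z x); case: (grid3 z y).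
Qed.

Definition pm (r k : nat) : bool := ((k == 0) && (r != 1)) || ((k == 2) && (r == 1)).
Definition sh (n : nat) : nat := if n %% 3 == 0 then 2 else 0.
Definition An n : {set 'I_3 * 'I_n} := [set v : 'I_3 * 'I_n | pm v.1 ((v.2 + sh n) %% 3)].
Definition patc (k : nat) : nat := if k == 0 then 5 else if k == 1 then 0 else 2.
Definition ecd n g := if (4 <= g) && (g < n + 4) then patc ((g - 4 + sh n) %% 3) else 8.
Definition ewin n o := [:: ecd n o; ecd n o.+1; ecd n o.+2; ecd n o.+3; ecd n o.+4].

Lemma codeA_An n j : j < n -> codeA (An n) j = patc ((j + sh n) %% 3).
Proof.
move=> hj.
have hm r (hr : r < 3) : memb (An n) r j = pm r ((j + sh n) %% 3).
  by have := membE (An n) (Ordinal hr, Ordinal hj); rewrite inE /= => ->.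
rewrite /codeA !hm //.
have : (j + sh n) %% 3 < 3 by rewrite ltn_pmod.
by case: ((j + sh n) %% 3) => [|[|[|]]].
Qed.

Lemma cd_An n g : cd (An n) g = ecd n g.
Proof.
rewrite /cd /ecd; case: ifP => // /andP [h1 h2].
by rewrite codeA_An //; nlia.
Qed.

Lemma win_An n o : win (An n) o = ewin n o.
Proof. by rewrite /win /ewin !cd_An. Qed.

Lemma sh_sub n : 3 <= n -> sh (n - 3) = sh n.
Proof. by move=> hn; rewrite /sh -{2}(subnK hn) modnDr. Qed.

Lemma ecd_shift n g : 3 <= n -> 7 <= g -> ecd n g = ecd (n - 3) (g - 3).
Proof.
move=> hn hg; rewrite /ecd.
have -> : (4 <= g) && (g < n + 4) = (4 <= g - 3) && (g - 3 < n - 3 + 4).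
  by apply/idP/idP => /andP [a b]; apply/andP; split; nlia.
case: ifP => // _.
rewrite sh_sub //.
have -> : g - 4 + sh n = (g - 3 - 4 + sh n) + 3 by nlia.
by rewrite modnDr.
Qed.

Lemma ecd_shift2 n g : 3 <= n -> g < n -> ecd n g = ecd (n - 3) g.
Proof.
move=> hn hg; rewrite /ecd sh_sub //.
have -> : g < n + 4 by nlia.
by have -> : g < n - 3 + 4 by nlia.
Qed.

Lemma base_ok : all (fun n => all (fun j => check5 true (ewin n j.+1)) (iota 0 n)) (iota 0 13).
Proof. by vm_compute. Qed.

Lemma ewin_ok n j : j < n -> check5 true (ewin n j.+1).
Proof.
elim/ltn_ind: n j => n IH j hj.
case: (ltnP n 13) => hn.
  move/allP: base_ok => /(_ n); rewrite mem_iota hn => /(_ isT) /allP /(_ j).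
  by rewrite mem_iota hj; apply.
case: (leqP 6 j) => hj6.
  have -> : ewin n j.+1 = ewin (n - 3) (j - 3).+1.
    rewrite /ewin; congr [:: _; _; _; _; _]; rewrite ecd_shift //; try nlia; congr ecd; nlia.
  by apply: IH; nlia.
have -> : ewin n j.+1 = ewin (n - 3) j.+1.
  by rewrite /ewin; congr [:: _; _; _; _; _]; rewrite ecd_shift2 //; nlia.
by apply: IH; nlia.
Qed.

Lemma triple k : popc (patc (k %% 3)) + popc (patc ((k + 1) %% 3)) + popc (patc ((k + 2) %% 3)) = 3.
Proof.
rewrite -(modnDml k 1) -(modnDml k 2).
have : k %% 3 < 3 by rewrite ltn_pmod.
by case: (k %% 3) => [|[|[|]]].
Qed.

Arguments popc : simpl never.
Arguments patc : simpl never.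

Lemma F3 s m : \sum_(0 <= j < m + 3) popc (patc ((j + s) %% 3)) =
  \sum_(0 <= j < m) popc (patc ((j + s) %% 3)) + 3.
Proof.
rewrite addn3 !big_nat_recr //= -!addnA; congr (_ + _).
have e1 : m + s + 1 = m.+1 + s by nlia.
have e2 : m + s + 2 = m.+2 + s by nlia.
rewrite -e1 -e2 -(modnDml (m + s) 1) -(modnDml (m + s) 2).
have : (m + s) %% 3 < 3 by rewrite ltn_pmod.
by case: ((m + s) %% 3) => [|[|[|]]].
Qed.

Lemma Fq s q r : \sum_(0 <= j < q * 3 + r) popc (patc ((j + s) %% 3)) =
  q * 3 + \sum_(0 <= j < r) popc (patc ((j + s) %% 3)).
Proof.
elim: q => [|q IH]; first by rewrite mul0n !add0n.
have -> : q.+1 * 3 + r = (q * 3 + r) + 3 by nlia.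
rewrite F3 IH; nlia.
Qed.

Lemma card_An n : #|An n| = if n %% 3 == 1 then n.+1 else n.
Proof.
rewrite cardA.
rewrite (eq_bigr (fun j : 'I_n => popc (patc ((j + sh n) %% 3)))); last first.
  by move=> j _; rewrite codeA_An.
rewrite -(big_mkord xpredT (fun j => popc (patc ((j + sh n) %% 3)))).
have := Fq (sh n) (n %/ 3) (n %% 3); rewrite -divn_eq => ->.
rewrite /sh.
move: (divn_eq n 3) (ltn_pmod n (isT : 0 < 3)).
have p0 : popc (patc ((0 + 0) %% 3)) = 2 by [].
have p1 : popc (patc ((1 + 0) %% 3)) = 0 by [].
case: (n %% 3) => [|[|[|]]] // e _; rewrite ?big_nat_recr //= ?big_geq //= ?p0 ?p1; nlia.
Qed.

Theorem theorem1p12 (n : nat) : 0 < n ->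
  if n %% 3 == 1 then n <= adim (@grid3 n) <= n.+1
  else n.-1 <= adim (@grid3 n) <= n.
Proof.
move=> hn.
have lo : n <= adim (@grid3 n).
  apply: adim_ge; last by move=> A hA; exact: res_lower.
  rewrite card_prod !card_ord; nlia.
have up : adim (@grid3 n) <= #|An n|.
  apply: adim_le; apply: bridge_up => j hj.
  rewrite win_An; exact: ewin_ok.
rewrite card_An in up.
case: ifP => h; rewrite h in up; apply/andP; split => //; nlia.
Qed.
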